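(* Let $I$ be a countable set with $|I|\ge 2$, let $\mathfrak{M}_i=(S_i,\mathcal{L}_i)$ be partial linear spaces for $i\in I$, let $\mathfrak{M}=\bigotimes_{i\in I}\mathfrak{M}_i$ with point set $S=\prod_{i\in I}S_i$, and for each $i$ let $\mathcal{H}_i^{\mathrm{all}}$ denote the family consisting of all hyperplanes of $\mathfrak{M}_i$ together with the set $S_i$. For $\mathcal{H}\subseteq S$ the following are equivalent: (1) $\mathcal{H}$ is a hyperplane of $\mathfrak{M}$; (2) for all $a\in S$ and $i\in I$ we have $\mathcal{H}^{[a]}_i\in\mathcal{H}_i^{\mathrm{all}}$, and there exist $a\in S$, $i\in I$ with $\mathcal{H}^{[a]}_i\neq S_i$.
   Context: A partial linear space is a pair $(S,\mathcal{L})$ with $\mathcal{L}$ a family of subsets of $S$ (lines) such that every line has at least two points, every point lies on a line, and two distinct lines share at most one point. A subspace is a set $X$ such that any line meeting $X$ in at least two points is contained in $X$; a hyperplane is a proper subspace meeting every line. Segre product: for $a\in S=\prod_{i\in I}S_i$, $i\in I$ and $x\in S_i$, $a[i/x]$ denotes $a$ with its $i$-th coordinate replaced by $x$, and for $A\subseteq S_i$, $a[i/A]=\{a[i/x]:x\in A\}$. The Segre product $\bigotimes_{i\in I}\mathfrak{M}_i$ has point set $S$ and lines $a[i/l]$ for $a\in S$, $i\in I$, $l\in\mathcal{L}_i$. For $\mathcal{H}\subseteq S$, $a\in S$, $i\in I$: $\mathcal{H}^{[a]}_i=\{x\in S_i: a[i/x]\in\mathcal{H}\}$. *)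

(* Defs.v *)
From Stdlib Require Import ClassicalEpsilon.

Definition set (T : Type) := T -> Prop.

Definition partial_linear_space {T : Type} (L : set (set T)) : Prop :=
  (forall l, L l -> exists x y, x <> y /\ l x /\ l y) /\
  (forall p : T, exists l, L l /\ l p) /\
  (forall l1 l2, L l1 -> L l2 -> l1 <> l2 ->
     forall x y, l1 x -> l2 x -> l1 y -> l2 y -> x = y).

Definition subspace {T : Type} (L : set (set T)) (X : set T) : Prop :=
  forall l, L l -> (exists x y, x <> y /\ l x /\ l y /\ X x /\ X y) ->
    forall z, l z -> X z.

Definition hyperplane {T : Type} (L : set (set T)) (X : set T) : Prop :=
  subspace L X /\ (exists p, ~ X p) /\ (forall l, L l -> exists p, l p /\ X p).

Definition upd {I : Type} {S : I -> Type} (a : forall j, S j) (i : I) (x : S i)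
  : forall j, S j :=
  fun j => match excluded_middle_informative (i = j) with
           | left e => eq_rect i S x j e
           | right _ => a j
           end.

Definition upd_set {I : Type} {S : I -> Type} (a : forall j, S j) (i : I)
  (A : set (S i)) : set (forall j, S j) :=
  fun b => exists x, A x /\ b = upd a i x.

Definition segre_lines {I : Type} {S : I -> Type} (L : forall i, set (set (S i)))
  : set (set (forall j, S j)) :=
  fun l' => exists (a : forall j, S j) (i : I) (l : set (S i)),
    L i l /\ l' = upd_set a i l.

Definition slice {I : Type} {S : I -> Type} (H : set (forall j, S j))
  (a : forall j, S j) (i : I) : set (S i) :=
  fun x => H (upd a i x).

Definition H_all {T : Type} (L : set (set T)) (X : set T) : Prop :=
  hyperplane L X \/ (forall x, X x).

(* Main.v *)
Require Import Defs.
From Stdlib Require Import ClassicalEpsilon ProofIrrelevance FunctionalExtensionality Classical.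

Lemma upd_same {I : Type} {S : I -> Type} (a : forall j, S j) i x :
  upd a i x i = x.
Proof.
  unfold upd. destruct (excluded_middle_informative (i = i)) as [e|n].
  - rewrite (proof_irrelevance _ e eq_refl). reflexivity.
  - exfalso; apply n; reflexivity.
Qed.

Lemma upd_id {I : Type} {S : I -> Type} (a : forall j, S j) i :
  upd a i (a i) = a.
Proof.
  apply functional_extensionality_dep; intro j. unfold upd.
  destruct (excluded_middle_informative (i = j)) as [e|n].
  - destruct e. reflexivity.
  - reflexivity.
Qed.

Theorem theorem3p1 (I : Type) (S : I -> Type) (L : forall i, set (set (S i)))
  (HIcount : exists f : I -> nat, forall i j, f i = f j -> i = j)
  (HI2 : exists i j : I, i <> j)
  (Hpls : forall i, partial_linear_space (L i))
  (H : set (forall j, S j)) :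
  hyperplane (segre_lines L) H <->
  ((forall (a : forall j, S j) (i : I), H_all (L i) (slice H a i)) /\
   exists (a : forall j, S j) (i : I), ~ (forall x, slice H a i x)).
Proof.
  split.
  - intros [Hsub [[p Hp] Hmeet]]. split.
    + intros a i.
      assert (Hs : subspace (L i) (slice H a i)).
      { intros l Hl [x [y [Hxy [lx [ly [Hx Hy]]]]]] z lz.
        unfold slice in *.
        apply (Hsub (upd_set a i l)).
        - exists a, i, l. split; auto.
        - exists (upd a i x), (upd a i y). repeat split.
          + intro E. apply Hxy. rewrite <- (upd_same a i x), <- (upd_same a i y), E. reflexivity.
          + exists x; auto.
          + exists y; auto.
          + exact Hx.
          + exact Hy.
        - exists z; auto. }
      destruct (classic (forall x, slice H a i x)) as [Hall|Hn].
      * right; exact Hall.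
      * left. split; [exact Hs|]. split.
        -- apply not_all_ex_not in Hn. exact Hn.
        -- intros l Hl. destruct (Hmeet (upd_set a i l)) as [b [[x [lx Eb]] Hb]].
           { exists a, i, l; auto. }
           exists x. split; auto. unfold slice. subst b; exact Hb.
    + destruct HI2 as [i _]. exists p, i. intro A. apply Hp.
      specialize (A (p i)). unfold slice in A. rewrite upd_id in A. exact A.
  - intros [Hall [a [i Hn]]]. split; [|split].
    + intros l' [b [i' [l [Hl El]]]] [x' [y' [Hxy [lx [ly [Hx Hy]]]]]] z lz.
      subst l'. destruct lx as [x [lx Ex]]. destruct ly as [y [ly Ey]].
      destruct lz as [w [lw Ew]]. subst x' y' z.
      destruct (Hall b i') as [[Hs _]|Ha].
      * apply (Hs l Hl); auto. exists x, y. repeat split; auto.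
        intro E; apply Hxy; subst; reflexivity.
      * apply Ha.
    + apply not_all_ex_not in Hn. destruct Hn as [x Hx]. exists (upd a i x). exact Hx.
    + intros l' [b [i' [l [Hl El]]]]. subst l'.
      destruct (Hall b i') as [[_ [_ Hm]]|Ha].
      * destruct (Hm l Hl) as [x [lx Hx]]. exists (upd b i' x). split; auto.
        exists x; auto.
      * destruct (Hpls i') as [Hne _]. destruct (Hne l Hl) as [x [_ [_ [lx _]]]].
        exists (upd b i' x). split; [exists x; auto | apply Ha].
Qed.
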